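(* Let $\sigma=(k_1,\ldots,k_\ell)$ be a tuple of positive integers with $\ell\ge 2$ and $K=\sum_{i=1}^\ell k_i\ge 2$. Let $C_\sigma=\sum_{j=0}^{\ell-1}3^{\ell-1-j}2^{k_1+\cdots+k_j}$ and $\rho=C_\sigma/(2^K-3^\ell)\in\mathbb Z_2$. Define $x_0=\rho$ and $x_j=T(x_{j-1})$ for $j\ge 1$, where $T(x)=(3x+1)/2^{v_2(3x+1)}$ on $2$-adic integers $x$ with $3x+1\neq 0$. Then $v_2(3x_{j-1}+1)=k_j$ for each $j=1,\ldots,\ell$ (i.e. $\sigma$ is a phantom family: the $2$-adic root $\rho$ realizes the valuation pattern $\sigma$).
   Context: $\mathbb Z_2$ is the ring of $2$-adic integers; $2^K-3^\ell$ is odd, hence a unit in $\mathbb Z_2$. $v_2$ is the $2$-adic valuation on $\mathbb Z_2$; the empty sum $k_1+\cdots+k_0$ is $0$. *)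

(* Defs.v *)
From mathcomp Require Import all_boot all_order all_algebra.
Set Implicit Arguments. Unset Strict Implicit. Unset Printing Implicit Defensive.
Import Order.TTheory GRing.Theory Num.Theory.
Local Open Scope ring_scope.

(* 2-adic valuation on rationals (the orbit lives in Z_(2) = Q ∩ Z_2, and
   v2 below is the restriction of the 2-adic valuation); v2 0 := 0 (junk). *)
Definition v2 (q : rat) : int :=
  if q == 0 then 0 else (logn 2 `|numq q|)%:Z - (logn 2 `|denq q|)%:Z.

Definition T (x : rat) : rat := (3 * x + 1) / (2%:Q ^ (v2 (3 * x + 1))).

(* sigma = (k_1,...,k_l) is the sequence s, k_{i+1} = nth 0 s i *)
Definition Csigma (s : seq nat) : nat :=
  (\sum_(j < size s) 3 ^ (size s - 1 - j) * 2 ^ (\sum_(i < j) nth 0 s i))%N.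

Definition rho (s : seq nat) : rat :=
  (Csigma s)%:R / ((2 ^ sumn s)%N%:R - (3 ^ size s)%N%:R).

Definition orbitx (s : seq nat) (j : nat) : rat := iter j T (rho s).

(* Main.v *)
Require Import Defs.
From mathcomp Require Import all_boot all_order all_algebra.
From mathcomp Require Import zify ring lra.
Import GRing.Theory Num.Theory.
Local Open Scope ring_scope.

Lemma sumn_ord (t : seq nat) : sumn t = (\sum_(i < size t) nth 0 t i)%N.
Proof. by rewrite sumnE (big_nth 0) big_mkord. Qed.

Lemma csig_cons (k : nat) (t : seq nat) :
  (3 * Csigma (k :: t) + 2 ^ (k + sumn t) =
   2 ^ k * Csigma (rcons t k) + 3 ^ (size t).+1)%N.
Proof.
rewrite /Csigma size_rcons /=.
rewrite big_ord_recl big_ord_recr /=.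
set P := fun i : nat => (\sum_(i0 < i) nth 0 t i0)%N.
have -> : (\sum_(i < size t) nth 0 (rcons t k) i = sumn t)%N.
  rewrite sumn_ord; apply: eq_bigr => i _.
  by rewrite nth_rcons ltn_ord.
have -> : (\sum_(i < size t) 3 ^ ((size t).+1 - 1 - bump 0 i) *
       2 ^ (\sum_(i0 < bump 0 i) nth 0 (k :: t) i0) =
     \sum_(i < size t) 2 ^ k * (3 ^ (size t - 1 - i) * 2 ^ P i))%N.
  apply: eq_bigr => i _.
  rewrite /bump /= add1n big_ord_recl /= expnD /P.
  have -> : ((size t).+1 - 1 - i.+1 = size t - 1 - i)%N by lia.
  by rewrite mulnCA.
have -> : (\sum_(i < size t) 3 ^ ((size t).+1 - 1 - i) *
       2 ^ (\sum_(i0 < i) nth 0 (rcons t k) i0) =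
     \sum_(i < size t) 3 * (3 ^ (size t - 1 - i) * 2 ^ P i))%N.
  apply: eq_bigr => i _.
  have hi := ltn_ord i.
  have -> : (\sum_(i0 < i) nth 0 (rcons t k) i0 = P i)%N.
    apply: eq_bigr => i0 _; rewrite nth_rcons (ltn_trans (ltn_ord i0) hi) //.
  rewrite mulnA -expnS; congr (3 ^ _ * _)%N; lia.
rewrite -!big_distrr /=.
set S := (\sum_(i < size t) _)%N.
have -> : ((size t).+1 - 1 - size t = 0)%N by lia.
have -> : ((size t).+1 - 1 = size t)%N by lia.
rewrite expnD expnS.
rewrite big_ord0 subn0 expn0 !muln1 mul1n. nia.
Qed.
Lemma csig_odd (a : nat) (u : seq nat) : (0 < a)%N -> odd (Csigma (a :: u)).
Proof.
move=> ha; rewrite /Csigma big_ord_recl big_ord0 expn0 muln1 oddD oddX orbT.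
set X := (\sum_(i < _) _)%N.
suff h : (2 %| X)%N by move: h; rewrite dvdn2 => /negbTE ->.
apply: dvdn_sum => i _; apply: dvdn_mull.
rewrite /bump /= big_ord_recl /= expnD; apply: dvdn_mulr.
by rewrite -(prednK ha) expnS dvdn_mulr.
Qed.
Lemma v2_eq (q : rat) (k a : nat) (b : int) : odd a -> odd `|b|%N ->
  q = (2 ^ k * a)%N%:R / b%:~R -> v2 q = k%:Z.
Proof.
move=> ha hb hq.
have a0 : (0 < a)%N by move: ha; case: (a).
have b0 : b != 0 by apply/negP => /eqP b0; rewrite b0 in hb.
have b0' : (b%:~R : rat) != 0 by rewrite intr_eq0.
have q0 : q != 0.
  by rewrite hq mulf_eq0 invr_eq0 negb_or b0' pnatr_eq0 muln_eq0 expn_eq0 /= -lt0n a0.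
have e : (numq q * b = (2 ^ k * a)%N%:Z * denq q)%R.
  apply/eqP; rewrite -(eqr_int rat) rmorphM /= numqE.
  rewrite {1}hq mulrAC divfK // rmorphM /=.
  by rewrite rmorphM /= -natrM.
have e2 := congr1 absz e.
rewrite !abszM /= in e2.
have n0 : (0 < `|numq q|)%N by rewrite absz_gt0 numq_eq0.
have d0 : (0 < `|denq q|)%N by rewrite absz_gt0 denq_eq0.
have bb : (0 < `|b|)%N by rewrite absz_gt0.
have := congr1 (logn 2) e2.
rewrite lognM // lognM ?muln_gt0 ?expn_gt0 //= lognM ?expn_gt0 //.
rewrite lognX (logn_coprime (m := `|b|%N)) ?coprime2n //.
rewrite (logn_coprime (m := a)) ?coprime2n // => h.
rewrite /v2 (negbTE q0).
have l2 : logn 2 2 = 1%N by [].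
rewrite l2 in h; apply/eqP; rewrite subr_eq -PoszD; apply/eqP; congr Posz; lia.
Qed.

Definition Dz (s : seq nat) : int := (2 ^ sumn s)%N%:Z - (3 ^ size s)%N%:Z.

Lemma Dz_odd s : (0 < sumn s)%N -> odd `|Dz s|%N.
Proof.
move=> hs; rewrite /Dz.
have h2 : odd (2 ^ sumn s) = false by rewrite oddX orbF; case: (sumn s) hs.
have h3 : odd (3 ^ size s) by rewrite oddX orbT.
case: (leqP (3 ^ size s) (2 ^ sumn s)) => h.
  by rewrite distnEl // oddB // h2 h3.
by rewrite distnEr ?(ltnW h) // oddB ?(ltnW h) // h2 h3.
Qed.

Lemma Dz_neq0 s : (0 < sumn s)%N -> (Dz s)%:~R != 0 :> rat.
Proof.
move=> /(Dz_odd s) h; rewrite intr_eq0; apply/negP => /eqP e; by rewrite e in h.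
Qed.

Lemma step (k : nat) (t : seq nat) : (0 < k)%N -> all (fun k => 0 < k)%N t ->
  let x := (Csigma (k :: t))%:R / (Dz (k :: t))%:~R : rat in
  [/\ 3 * x + 1 != 0, v2 (3 * x + 1) = k%:Z &
      T x = (Csigma (rcons t k))%:R / (Dz (k :: t))%:~R].
Proof.
move=> hk ht.
have hC : odd (Csigma (rcons t k)).
  case: t ht => [|a u] /= h; first exact: csig_odd.
  by case/andP: h => ha _; apply: csig_odd.
move=> x.
have hs : (0 < sumn (k :: t))%N by rewrite /= addn_gt0 hk.
have D0 := Dz_neq0 _ hs.
have e : 3 * x + 1 = (2 ^ k * Csigma (rcons t k))%N%:R / (Dz (k :: t))%:~R.
  have h := congr1 (fun n => n%:R : rat) (csig_cons k t).
  rewrite /= !natrD in h.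
  have -> : 3 * x + 1 = ((3 * Csigma (k :: t))%N%:R + (Dz (k :: t))%:~R) / (Dz (k :: t))%:~R.
    by rewrite /x natrM; field.
  congr (_ / _); rewrite /Dz rmorphB /=.
  have cv : forall n : nat, ((n%:Z)%:~R : rat) = n%:R by [].
  rewrite !cv natrM; lra.
have v := v2_eq _ _ _ _ hC (Dz_odd _ hs) e.
have ne : 3 * x + 1 != 0.
  rewrite e mulf_eq0 invr_eq0 negb_or D0 andbT pnatr_eq0 muln_eq0 expn_eq0 /=.
  by apply/negP => /eqP h0; rewrite h0 in hC.
split => //.
rewrite /T v e natrM natrX.
have -> : (2%:Q ^ (Posz k)) = 2 ^+ k by [].
have h2 : (2 : rat) ^+ k != 0 by apply: expf_neq0.
field; by rewrite h2 D0.
Qed.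

Lemma all_rot' (P : pred nat) n s : all P (rot n s) = all P s.
Proof. by rewrite /rot all_cat andbC -all_cat cat_take_drop. Qed.

Lemma Dz_rot n s : Dz (rot n s) = Dz s.
Proof. by rewrite /Dz sumn_rot size_rot. Qed.

Lemma orb (s : seq nat) j : all (fun k => 0 < k)%N s -> (j <= size s)%N ->
  orbitx s j = (Csigma (rot j s))%:R / (Dz s)%:~R.
Proof.
move=> hs; elim: j => [|j IH] hj.
  rewrite rot0 /orbitx /= /rho /Dz rmorphB /=; done.
rewrite /orbitx iterS -/(orbitx s j) IH ?(ltnW hj) // (rotS hj).
have hr := all_rot' (fun k => 0 < k)%N j s; rewrite hs in hr.
have hsz : (0 < size (rot j s))%N by rewrite size_rot (leq_ltn_trans _ hj).
rewrite -(Dz_rot j s).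
case E: (rot j s) hr hsz => [|k t] //= /andP[hk ht] _.
by have [_ _ ->] := step _ _ hk ht; rewrite rot1_cons.
Qed.

Theorem mainTheorem9 (s : seq nat) :
  all (fun k => 0 < k)%N s -> (2 <= size s)%N -> (2 <= sumn s)%N ->
  forall j : nat, (j < size s)%N ->
    3 * orbitx s j + 1 != 0 /\ v2 (3 * orbitx s j + 1) = (nth 0%N s j)%:Z.
Proof.
move=> hs _ _ j hj.
rewrite orb ?(ltnW hj) //.
have hn : nth 0%N (rot j s) 0 = nth 0%N s j.
  by rewrite /rot nth_cat size_drop subn_gt0 hj nth_drop addn0.
have hr := all_rot' (fun k => 0 < k)%N j s; rewrite hs in hr.
rewrite -hn -(Dz_rot j s).
have hsz : (0 < size (rot j s))%N by rewrite size_rot (leq_ltn_trans _ hj).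
case E: (rot j s) hr hsz => [|k t] //= /andP[hk ht] _.
by have [h1 h2 _] := step _ _ hk ht.
Qed.
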